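(* Let $k\ge 3$ and let $c_1\ge c_2\ge\dots\ge c_k>0$ be constants with $\sum_{i=1}^k c_i=1$. For every $n$ such that all $c_i n$ are integers, let $G_n$ be the complete $k$-partite graph with parts $V_1,\dots,V_k$, $|V_i|=c_i n$. Then: (i) if $c_1\le \tfrac12$, $\mathrm{rc}(G_n)=n$; (ii) if $c_1>\tfrac12$, $\mathrm{rc}(G_n)=2c_1n-1$.
   Context: Robot crawler model: let $G=(V,E)$ be a finite connected simple graph with $|V|=n$. An initial weighting is a bijection $w_0:V\to\{-n,-n+1,\dots,-1\}$. At time $1$ the crawler visits $w_0^{-1}(-n)$. If the crawler visits vertex $v$ at time $t$, then $w_t(v)=t$ and $w_t(u)=w_{t-1}(u)$ for all $u\neq v$. If $\min_{y\in V}w_t(y)>0$, the process stops and $\mathcal{RC}(G,w_0):=t$. Otherwise, at time $t+1$ the crawler moves to the neighbour $u$ of $v$ minimising $w_t(u)$ (the weights are distinct, so this is well defined). A vertex is ''cleaned'' at the first time it is visited. With $\Omega_n$ the set of all $n!$ initial weightings, $\mathrm{rc}(G)=\min_{w_0\in\Omega_n}\mathcal{RC}(G,w_0)$, $\mathrm{RC}(G)=\max_{w_0\in\Omega_n}\mathcal{RC}(G,w_0)$, and $\overline{\mathrm{rc}}(G)=\mathbb{E}\,\mathcal{RC}(G,\overline{w_0})$ where $\overline{w_0}$ is uniformly distributed on $\Omega_n$. A complete $k$-partite graph with parts $V_1,\dots,V_k$ has an edge between $u$ and $v$ if and only if $u,v$ lie in different parts. *)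

(* Defs.v *)
From HB Require Import structures.
From mathcomp Require Import all_boot all_order all_algebra.
Set Implicit Arguments. Unset Strict Implicit. Unset Printing Implicit Defensive.
Import Order.TTheory GRing.Theory Num.Theory.

(* Initial weighting: a bijection V -> {-n,...,-1}, n = |V|.  Stated as an
   injective map into {-n,...,-1} (injective between sets of equal finite size
   = bijective). *)
Definition is_weighting (T : finType) (w0 : T -> int) : Prop :=
  injective w0 /\ forall v, ((- (#|T|%:Z) <= w0 v) && (w0 v <= -1))%R.

Definition upd (T : finType) (w : T -> int) (v : T) (x : int) : T -> int :=
  fun u => if u == v then x else w u.

(* the neighbour of v minimising the current weight (weights are distinct,
   so this is the unique such neighbour); if v had no neighbour we stay at v
   (never happens in a connected graph with >= 2 vertices). *)
Definition next_vertex (T : finType) (adj : rel T) (w : T -> int) (v : T) : T :=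
  odflt v [pick u | adj v u && [forall u', adj v u' ==> (w u <= w u')%R]].

Definition start_vertex (T : finType) (w0 : T -> int) : option T :=
  [pick v | [forall u, (w0 v <= w0 u)%R]].

(* crawl_state adj w0 t = (position, weighting) at time t.+1, i.e. after the
   crawler's (t+1)-th visit: (v_{t+1}, w_{t+1}). *)
Fixpoint crawl_state (T : finType) (adj : rel T) (w0 : T -> int) (t : nat)
  : option (T * (T -> int)) :=
  match t with
  | 0 => omap (fun v => (v, upd w0 v 1%:Z)) (start_vertex w0)
  | t'.+1 =>
      omap (fun p => let u := next_vertex adj p.2 p.1 in
                     (u, upd p.2 u (t'.+2)%:Z))
           (crawl_state adj w0 t')
  end.

Definition stopped_at (T : finType) (adj : rel T) (w0 : T -> int) (t : nat) : bool :=
  match t with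
  | 0 => false
  | t'.+1 =>
      match crawl_state adj w0 t' with
      | Some (_, w) => [forall y, (0 < w y)%R]
      | None => false
      end
  end.

Definition RC_is (T : finType) (adj : rel T) (w0 : T -> int) (m : nat) : Prop :=
  stopped_at adj w0 m /\ forall t, t < m -> ~~ stopped_at adj w0 t.

Definition rc_is (T : finType) (adj : rel T) (m : nat) : Prop :=
  (exists w0, is_weighting w0 /\ RC_is adj w0 m) /\
  (forall w0 m', is_weighting w0 -> RC_is adj w0 m' -> m <= m').

Definition kpart_vertex (k : nat) (s : 'I_k -> nat) : finType :=
  {i : 'I_k & 'I_(s i)}.

Definition kpart_adj (k : nat) (s : 'I_k -> nat) : rel (kpart_vertex s) :=
  fun x y => tag x != tag y.

(* Main.v *)
Require Import Defs.
From HB Require Import structures.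
From mathcomp Require Import all_boot all_order all_algebra.
From mathcomp Require Import zify lra.
Import Order.TTheory GRing.Theory Num.Theory.

Lemma count_card (T : finType) (L : seq T) (P : pred T) :
  uniq L -> (forall x, x \in L) -> count P L = #|P|.
Proof.
move=> Hu Hall; rewrite -size_filter; apply/esym.
rewrite -(card_uniqP (filter_uniq P Hu)); apply: eq_card => x.
by rewrite mem_filter Hall andbT.
Qed.

Lemma cnt_lb (T : finType) (L : seq T) (P : pred T) x0 a b :
  uniq L -> (forall x, x \in L) -> (a <= b <= size L)%N ->
  (forall z, (a <= z < b)%N -> P (nth x0 L z)) -> (b - a <= #|P|)%N.
Proof.
move=> Hu Hall /andP[Hab Hb] H; rewrite -(@count_card _ _ P Hu Hall).
rewrite -(cat_take_drop b L) count_cat -(cat_take_drop a (take b L)) count_cat.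
have -> : count P (drop a (take b L)) = (b - a)%N.
  have Hs : size (drop a (take b L)) = (b - a)%N by rewrite size_drop size_take; case: ltnP; lia.
  rewrite -Hs; apply/eqP; rewrite -all_count; apply/(all_nthP x0) => z Hz.
  rewrite nth_drop nth_take; last by rewrite Hs in Hz; lia.
  apply: H; rewrite Hs in Hz; lia.
lia.
Qed.

Lemma cnt_ub (T : finType) (L : seq T) (P : pred T) x0 x :
  uniq L -> (forall y, y \in L) -> (x <= size L)%N ->
  (forall z, (x <= z < size L)%N -> ~~ P (nth x0 L z)) -> (#|P| <= x)%N.
Proof.
move=> Hu Hall Hx H; rewrite -(@count_card _ _ P Hu Hall).
rewrite -(cat_take_drop x L) count_cat.
have -> : count P (drop x L) = 0%N.
  apply/eqP; rewrite -leqn0 leqNgt -has_count; apply/(has_nthP x0) => [[z Hz]].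
  rewrite nth_drop; apply/negP/H; rewrite size_drop in Hz; lia.
have := count_size P (take x L); rewrite size_take; case: ltnP; lia.
Qed.

Lemma sorted_mono (T : finType) (tg : T -> nat) (L : seq T) x0 a b :
  sorted (fun x y => (tg x <= tg y)%N) L -> (a <= b)%N -> (b < size L)%N ->
  (tg (nth x0 L a) <= tg (nth x0 L b))%N.
Proof.
move=> Hs Hab Hb.
have Htr : transitive (fun x y : T => (tg x <= tg y)%N) by move=> y x z; apply: leq_trans.
have Hrf : reflexive (fun x y : T => (tg x <= tg y)%N) by move=> x.
have := @sorted_leq_nth _ _ Htr Hrf x0 L Hs a b.
apply => //; rewrite ?inE; try lia.
Qed.

Lemma prefix0 (T : finType) (tg : T -> nat) (L : seq T) x0 x :
  uniq L -> (forall y, y \in L) -> sorted (fun x y => (tg x <= tg y)%N) L ->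
  (x < size L)%N ->
  (tg (nth x0 L x) == 0%N) = (x < #|[pred v | tg v == 0%N]|)%N.
Proof.
move=> Hu Hall Hs Hx; apply/idP/idP => H.
  have := @cnt_lb T L [pred v | tg v == 0%N] x0 0 x.+1 Hu Hall.
  rewrite subn0; apply; first lia.
  move=> z Hz; rewrite inE; have := @sorted_mono _ _ _ x0 _ _ Hs (_ : z <= x)%N Hx; lia.
apply/negPn/negP => Hne.
have := @cnt_ub T L [pred v | tg v == 0%N] x0 x Hu Hall (ltnW Hx).
move=> /(_ _) Hle; suff : (#|[pred v | tg v == 0%N]| <= x)%N by lia.
apply: Hle => z Hz; rewrite inE; have := @sorted_mono _ _ _ x0 _ _ Hs (_ : x <= z)%N (_ : z < size L)%N; lia.
Qed.

Lemma modneq m a b : (0 < m)%N -> (a < b)%N -> (b < a + m)%N -> a %% m != b %% m.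
Proof.
move=> Hm Hab Hb; apply/negP => /eqP E.
have E2 : (a + 0 == a + (b - a) %[mod m])%N.
  by rewrite addn0 subnKC ?E // ltnW.
rewrite eqn_modDl mod0n modn_small in E2; last by lia.
move/eqP: E2; lia.
Qed.

Lemma mod_witness m i j : (0 < m)%N -> (m <= i)%N -> (j < m)%N -> j != i %% m ->
  exists2 i', (i - m < i' < i)%N & i' %% m = j.
Proof.
move=> Hm Hmi Hj Hne.
have Hi := divn_eq i m; have HR : (i %% m < m)%N by rewrite ltn_pmod.
move: Hi HR Hne; set R := i %% m; set Q := i %/ m => Hi HR Hne.
case: (ltnP j R) => Hjr.
  exists (Q * m + j)%N; first lia.
  by rewrite modnMDl modn_small.
have HQ : (0 < Q)%N.
  rewrite lt0n; apply/eqP => HQ0; rewrite HQ0 mul0n add0n in Hi; lia.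
have HQm : (Q * m = Q.-1 * m + m)%N by rewrite -{1}(prednK HQ) mulSn addnC.
have Hjr' : (R < j)%N by rewrite ltn_neqAle eq_sym Hne Hjr.
exists (Q.-1 * m + j)%N; first lia.
by rewrite modnMDl modn_small.
Qed.

Local Open Scope ring_scope.

Fixpoint Wt (T : finType) (w0 : T -> int) (q : nat -> T) (t : nat) : T -> int :=
  match t with
  | 0 => upd w0 (q 0%N) 1
  | t'.+1 => upd (Wt T w0 q t') (q t'.+1) (t'.+2)%:Z
  end.
Arguments Wt {T}.

Lemma crawl_eq (T : finType) (adj : rel T) w0 q (N : nat) :
  start_vertex w0 = Some (q 0%N) ->
  (forall t, (t < N)%N -> next_vertex adj (Wt w0 q t) (q t) = q t.+1) ->
  forall t, (t <= N)%N -> crawl_state adj w0 t = Some (q t, Wt w0 q t).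
Proof.
move=> Hs Hn; elim=> [|t IH] Ht /=; first by rewrite Hs.
by rewrite IH ?(ltnW Ht) //= Hn.
Qed.

Lemma next_eq (T : finType) (adj : rel T) (w : T -> int) v u :
  adj v u -> (forall u', adj v u' -> u' != u -> w u < w u') ->
  next_vertex adj w v = u.
Proof.
move=> Ha Hl; rewrite /next_vertex; case: pickP => [u' /andP[Ha' /forallP H]|Hn] /=.
  case: (eqVneq u' u) => // Hne.
  have := H u; rewrite Ha /= => Hle.
  by have := Hl _ Ha' Hne; rewrite ltNge Hle.
have := Hn u; rewrite Ha /=; move/negbT/negP; case.
apply/forallP => u'; apply/implyP => Ha'.
case: (eqVneq u' u) => [->//|Hne]; exact/ltW/Hl.
Qed.

Lemma start_eq (T : finType) (w0 : T -> int) v :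
  (forall u, u != v -> w0 v < w0 u) -> start_vertex w0 = Some v.
Proof.
move=> Hl; rewrite /start_vertex; case: pickP => [u' /forallP H|Hn] /=.
  case: (eqVneq u' v) => [->//|Hne].
  have := H v => Hle.
  by have := Hl _ Hne; rewrite ltNge Hle.
have := Hn v; move/negbT/negP; case.
apply/forallP => u'; case: (eqVneq u' v) => [->//|Hne]; exact/ltW/Hl.
Qed.

Lemma W_unvis (T : finType) (w0 : T -> int) q t y :
  (forall i, (i <= t)%N -> q i != y) -> Wt w0 q t y = w0 y.
Proof.
elim: t => [|t IH] H /=; rewrite /upd.
  by have := H 0%N (leqnn _); rewrite eq_sym => /negbTE ->.
have := H t.+1 (leqnn _); rewrite eq_sym => /negbTE ->.
by apply: IH => i Hi; apply: H; rewrite ltnW.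
Qed.

Lemma W_vis (T : finType) (w0 : T -> int) q t i y :
  (i <= t)%N -> q i = y -> (i.+1)%:Z <= Wt w0 q t y.
Proof.
move=> Hi Hq; elim: t Hi => [|t IH] Hi /=; rewrite /upd.
  move: Hi; rewrite leqn0 => /eqP Hi; subst; by rewrite eqxx.
case: (eqVneq y (q t.+1)) => E; first by lia.
move: Hi; rewrite leq_eqVlt => /orP[/eqP Hi|Hi]; first by subst; rewrite eqxx in E.
exact: IH.
Qed.

Lemma W_bound (T : finType) (w0 : T -> int) q t y :
  w0 y <= 0 -> Wt w0 q t y <= (t.+1)%:Z.
Proof.
move=> H0; elim: t => [|t IH] /=; rewrite /upd.
  by case: ifP => _ //; lia.
by case: ifP => _; lia.
Qed.

Lemma W_stable (T : finType) (w0 : T -> int) q i d y :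
  (forall j, (i < j <= i + d)%N -> q j != y) -> Wt w0 q (i + d) y = Wt w0 q i y.
Proof.
elim: d => [|d IH] H; first by rewrite addn0.
rewrite addnS /= /upd.
have := H (i + d).+1; rewrite addnS leqnn ltnS leq_addr eq_sym => /(_ isT) /negbTE ->.
apply: IH => j /andP[H1 H2]; apply: H; rewrite H1 /=; lia.
Qed.

Lemma W_last (T : finType) (w0 : T -> int) q i t y :
  w0 y <= 0 -> (i <= t)%N ->
  (forall j, (i < j <= t)%N -> q j != y) -> Wt w0 q t y <= (i.+1)%:Z.
Proof.
move=> H0 Hit H; rewrite -(subnKC Hit) W_stable; first exact: W_bound.
by move=> j Hj; apply: H; rewrite subnKC in Hj.
Qed.

Lemma next_adj (T : finType) (adj : rel T) (w : T -> int) v :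
  next_vertex adj w v = v \/ adj v (next_vertex adj w v).
Proof.
rewrite /next_vertex; case: pickP => [u /andP[]|] /=; auto.
Qed.

Lemma inv_all (T : finType) (adj : rel T) (w0 : T -> int) :
  (forall y, w0 y < 0) -> forall t v w, crawl_state adj w0 t = Some (v, w) ->
  (#|[set y | (0 < w y)%R]| <= t.+1)%N.
Proof.
move=> Hneg; elim=> [|t IH] v w /=.
  case: (start_vertex w0) => [v0|] //= [_ <-].
  rewrite -(cards1 v0); apply: subset_leq_card; apply/subsetP => y.
  rewrite !inE /upd; case: ifP => // _; by rewrite ltNge ltW.
case E: (crawl_state adj w0 t) => [[v' w']|] //= [_ <-].
set u := next_vertex _ _ _.
apply: (@leq_trans #|u |: [set y | (0 < w' y)%R]|).
  apply: subset_leq_card; apply/subsetP => y; rewrite !inE /upd.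
  by case: (y == u).
rewrite cardsU1; have := IH _ _ E; case: (_ \notin _); lia.
Qed.

Lemma inv_part (T : finType) (adj : rel T) (w0 : T -> int) (A : {set T}) :
  (forall y, w0 y < 0) -> (forall x y, x \in A -> y \in A -> ~~ adj x y) ->
  forall t v w, crawl_state adj w0 t = Some (v, w) ->
  0 < w v /\ (#|[set y in A | (0 < w y)%R]| * 2 <= t.+1 + (v \in A))%N.
Proof.
move=> Hneg Hind; elim=> [|t IH] v w /=.
  case: (start_vertex w0) => [v0|] //= [<- <-].
  rewrite /upd eqxx; split => //.
  have -> : [set y in A | 0 < upd w0 v0 1 y] = [set y in A | y == v0].
    apply/setP => y; rewrite !inE /upd; case: ifP => _; last by rewrite ltNge ltW ?andbF.
    by [].
  case Hv: (v0 \in A).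
    rewrite (_ : [set _ in _ | _] = [set v0]) ?cards1 //.
    by apply/setP => y; rewrite !inE; case: (eqVneq y v0) => [->|]; rewrite ?Hv ?eqxx ?andbF.
  rewrite (_ : [set _ in _ | _] = set0) ?cards0 //.
  by apply/setP => y; rewrite !inE; case: (eqVneq y v0) => [->|]; rewrite ?Hv ?eqxx ?andbF.
case E: (crawl_state adj w0 t) => [[v' w']|] //= [<- <-].
set u := next_vertex _ _ _.
have [Hpos Hc] := IH _ _ E.
split; first by rewrite /upd eqxx; lia.
have Hle : (#|[set y in A | (0 < upd w' u (t.+2)%:Z y)%R]| <=
            #|[set y in A | (0 < w' y)%R]| + ((u \in A) && (v' \notin A)))%N.
  case Hb: ((u \in A) && (v' \notin A)).
    apply: (@leq_trans #|u |: [set y in A | (0 < w' y)%R]|).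
      apply: subset_leq_card; apply/subsetP => y; rewrite !inE /upd.
      by case: ifP => _; rewrite ?orbT //= => ->.
    rewrite cardsU1; case: (_ \notin _) => /=; lia.
  rewrite addn0; apply: subset_leq_card; apply/subsetP => y; rewrite !inE /upd.
  case: ifP => [/eqP ->|_ //] /andP[Hu _]; rewrite Hu /=.
  have [Huv|Hadj] := next_adj _ adj w' v'.
    by move: Huv; rewrite -/u => ->.
  move: Hb; rewrite Hu /= => /negbFE Hv'.
  by move: Hadj; rewrite -/u => Hadj; have := Hind _ _ Hv' Hu; rewrite Hadj.
move: Hle Hc; case: (u \in A); case: (v' \in A) => /=; lia.
Qed.

Definition wr (T : finType) (L : seq T) (r : nat -> nat) (v : T) : int :=
  - (size L)%:Z + (r (index v L))%:Z.
Definition qf (T : finType) (L : seq T) (x0 : T) (g : nat -> nat) (p : nat) : T :=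
  nth x0 L (g p).
Arguments wr {T}. Arguments qf {T}.

Lemma W_idx_unvis (T : finType) (L : seq T) x0 g r t x :
  uniq L -> (forall i, (i <= t)%N -> (g i < size L)%N) -> (x < size L)%N ->
  (forall i, (i <= t)%N -> g i != x) ->
  Wt (wr L r) (qf L x0 g) t (nth x0 L x) = - (size L)%:Z + (r x)%:Z.
Proof.
move=> Hu Hg Hx H; rewrite W_unvis; first by rewrite /wr index_uniq.
by move=> i Hi; rewrite /qf nth_uniq ?H ?Hg.
Qed.

Lemma W_idx_vis (T : finType) (L : seq T) x0 g r t i x :
  (i <= t)%N -> g i = x -> (i.+1)%:Z <= Wt (wr L r) (qf L x0 g) t (nth x0 L x).
Proof. by move=> Hi Hg; apply: W_vis Hi _; rewrite /qf Hg. Qed.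

Lemma W_idx_last (T : finType) (L : seq T) x0 g r t i x :
  uniq L -> (forall i, (i <= t)%N -> (g i < size L)%N) -> (x < size L)%N ->
  (r x <= size L)%N -> (i <= t)%N ->
  (forall j, (i < j <= t)%N -> g j != x) ->
  Wt (wr L r) (qf L x0 g) t (nth x0 L x) <= (i.+1)%:Z.
Proof.
move=> Hu Hg Hx Hr Hi H; apply: W_last => //.
  rewrite /wr index_uniq //; lia.
move=> j Hj; rewrite /qf nth_uniq ?H ?Hg //; lia.
Qed.

Lemma construct (T : finType) (adj : rel T) (L : seq T) x0 (g r : nat -> nat) (N : nat) :
  uniq L -> (forall y, y \in L) ->
  (forall x, (x < size L)%N -> (r x < size L)%N) ->
  (forall x y, (x < size L)%N -> (y < size L)%N -> r x = r y -> x = y) ->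
  r (g 0%N) = 0%N ->
  (forall p, (p <= N)%N -> (g p < size L)%N) ->
  (forall t, (t < N)%N -> adj (qf L x0 g t) (qf L x0 g t.+1) /\
     forall x, (x < size L)%N -> adj (qf L x0 g t) (nth x0 L x) -> x != g t.+1 ->
       Wt (wr L r) (qf L x0 g) t (qf L x0 g t.+1) < Wt (wr L r) (qf L x0 g) t (nth x0 L x)) ->
  (forall x, (x < size L)%N -> exists2 p, (p <= N)%N & g p = x) ->
  is_weighting (wr L r) /\ stopped_at adj (wr L r) N.+1.
Proof.
move=> Hu Hall R1 R2 Hr0 Hg Step Cov.
have HT : #|T| = size L.
  rewrite -(card_uniqP Hu); apply: eq_card => y; by rewrite Hall.
have Hidx y : (index y L < size L)%N by rewrite index_mem.
split.
  split.
    move=> u v; rewrite /wr => E.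
    have E' : r (index u L) = r (index v L) by lia.
    have := R2 _ _ (Hidx u) (Hidx v) E' => Ei.
    by rewrite -(nth_index x0 (Hall u)) Ei nth_index.
  move=> v; rewrite HT /wr; have Hrv := R1 _ (Hidx v); apply/andP; split; lia.
have Hg0 : (g 0%N < size L)%N by apply: Hg.
have Hst : start_vertex (wr L r) = Some (qf L x0 g 0%N).
  apply: start_eq => u Hne; rewrite /wr /qf index_uniq // Hr0.
  suff : r (index u L) <> 0%N by lia.
  rewrite -Hr0 => /(R2 _ _ (Hidx u) Hg0) E; move: Hne.
  by rewrite /qf -E nth_index ?eqxx.
have Hnext : forall t, (t < N)%N ->
    next_vertex adj (Wt (wr L r) (qf L x0 g) t) (qf L x0 g t) = qf L x0 g t.+1.
  move=> t Ht; have [Ha Hl] := Step t Ht; apply: next_eq => // u' Ha' Hne.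
  rewrite -(nth_index x0 (Hall u')); apply: Hl => //.
    by rewrite nth_index.
  apply/eqP => E; move: Hne; by rewrite /qf -E nth_index ?eqxx.
rewrite /stopped_at (@crawl_eq T adj _ _ N Hst Hnext N (leqnn N)).
apply/forallP => y; rewrite -(nth_index x0 (Hall y)).
have [p Hp Hgp] := Cov _ (Hidx y).
have := @W_idx_vis T L x0 g r N p _ Hp Hgp.
by apply: lt_le_trans.
Qed.

Theorem theorem1 (R : realFieldType) (k : nat) (c : 'I_k -> R)
  (i0 : 'I_k) (n : nat) (s : 'I_k -> nat) :
  (3 <= k)%N ->
  nat_of_ord i0 = 0%N ->
  (forall i, 0 < c i) ->
  (forall i j : 'I_k, (i <= j)%N -> c j <= c i) ->
  \sum_(i < k) c i = 1 ->
  (0 < n)%N ->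
  (forall i, (s i)%:R = c i * n%:R) ->
  (c i0 <= 1 / 2 -> rc_is (@kpart_adj k s) n) /\
  (1 / 2 < c i0 -> rc_is (@kpart_adj k s) (2 * s i0).-1).
Proof.
move=> Hk Hi0 Hcpos Hmono Hsum Hnpos Hs.
have Hspos : forall i, (0 < s i)%N.
  move=> i; rewrite -(ltr0n R) Hs; apply: mulr_gt0 => //; by rewrite ltr0n.
have Hsn : (\sum_(i < k) s i)%N = n.
  apply/eqP; rewrite -(eqr_nat R) natr_sum.
  under eq_bigr do rewrite Hs.
  by rewrite -mulr_suml Hsum mul1r.
have Hmax : forall i, (s i <= s i0)%N.
  move=> i; rewrite -(ler_nat R) !Hs; apply: ler_wpM2r; first by rewrite ler0n.
  by apply: Hmono; rewrite Hi0.
have Hpart : forall i, #|[pred v : kpart_vertex s | tag v == i]| = s i.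
  move=> i; rewrite -[s i in RHS]card_ord.
  rewrite -(card_imset _ (@eq_from_Tagged _ (fun i => 'I_(s i)) i)).
  apply: eq_card => v; rewrite inE; case: v => i' j /=; apply/eqP/imsetP.
    move=> E; subst i'; by exists j.
  by case=> j0 _ E; have := congr1 tag E.
have HcardT : #|kpart_vertex s| = n.
  rewrite card_tagged sumnE big_map big_enum /= -Hsn.
  by apply: eq_bigr => i _; rewrite card_ord.
have Htg0 : forall v : kpart_vertex s, (tag v == i0) = (nat_of_ord (tag v) == 0%N).
  by move=> v; rewrite -Hi0.
have Hneg : forall w0 : kpart_vertex s -> int, is_weighting w0 -> forall y, w0 y < 0.
  by move=> w0 [_ H] y; have := H y; case/andP => _; lia.
have LB1 : forall w0 m, is_weighting w0 -> stopped_at (@kpart_adj k s) w0 m -> (n <= m)%N.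
  move=> w0 [|m] Hw //=; case E: crawl_state => [[v w]|] //= /forallP H.
  have := @inv_all _ (@kpart_adj k s) w0 (Hneg _ Hw) m v w E.
  rewrite (_ : [set y | 0 < w y] = setT) ?cardsT ?HcardT //.
  by apply/setP => y; rewrite !inE H.
have LB2 : forall w0 m, is_weighting w0 -> stopped_at (@kpart_adj k s) w0 m -> (s i0 * 2 <= m.+1)%N.
  move=> w0 [|m] Hw //=; case E: crawl_state => [[v w]|] //= /forallP H.
  have Hind : forall x y, x \in [set u : kpart_vertex s | tag u == i0] ->
      y \in [set u : kpart_vertex s | tag u == i0] -> ~~ @kpart_adj k s x y.
    by move=> x y; rewrite !inE /kpart_adj => /eqP -> /eqP ->; rewrite eqxx.
  have [_ ] := @inv_part _ (@kpart_adj k s) w0 _ (Hneg _ Hw) Hind m v w E.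
  rewrite (_ : [set y in _ | 0 < w y] = [set u : kpart_vertex s | tag u == i0]).
    rewrite (_ : #|[set u : kpart_vertex s | tag u == i0]| = s i0); first by case: (_ \in _); lia.
    by rewrite -(Hpart i0); apply: eq_card => z; rewrite inE.
  by apply/setP => y; rewrite !inE H andbT.
pose x0 : kpart_vertex s := Tagged (fun i => 'I_(s i)) (Ordinal (Hspos i0)).
pose L := sort (fun x y : kpart_vertex s => (nat_of_ord (tag x) <= tag y)%N) (enum (kpart_vertex s)).
have HLu : uniq L by rewrite sort_uniq enum_uniq.
have HLall : forall y, y \in L by move=> y; rewrite mem_sort mem_enum.
have HLsz : size L = n by rewrite size_sort -cardT.
have HLs : sorted (fun x y : kpart_vertex s => (nat_of_ord (tag x) <= tag y)%N) L.
  by apply: sort_sorted => x y; apply: leq_total.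
have Hpre : forall x, (x < n)%N -> (tag (nth x0 L x) == i0) = (x < s i0)%N.
  move=> x Hx; rewrite Htg0 (@prefix0 _ (fun v => nat_of_ord (tag v)) L x0 x HLu HLall HLs) ?HLsz //.
  congr (_ < _)%N; rewrite -(Hpart i0); apply: eq_card => z; by rewrite !inE Htg0.
have Hmon : forall x y, (x <= y)%N -> (y < n)%N ->
    (nat_of_ord (tag (nth x0 L x)) <= tag (nth x0 L y))%N.
  move=> x y Hxy Hy; apply: (@sorted_mono _ (fun v => nat_of_ord (tag v))) => //; by rewrite HLsz.
have HC : forall x y i, (x <= y)%N -> (y < n)%N -> tag (nth x0 L x) = i ->
    tag (nth x0 L y) = i -> (y.+1 - x <= s i)%N.
  move=> x y i Hxy Hy Ex Ey; rewrite -Hpart.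
  apply: (@cnt_lb _ L _ x0) => //; first by rewrite HLsz; lia.
  move=> z Hz; rewrite inE; apply/eqP/val_inj/eqP; rewrite eqn_leq.
  have H1 : (nat_of_ord (tag (nth x0 L x)) <= tag (nth x0 L z))%N by apply: Hmon; lia.
  have H2 : (nat_of_ord (tag (nth x0 L z)) <= tag (nth x0 L y))%N by apply: Hmon; lia.
  by rewrite Ex in H1; rewrite Ey in H2; rewrite H1 H2.
have par : forall p, exists i, p = (2 * i)%N \/ p = (2 * i).+1.
  by move=> p; exists p./2; case Ho: (odd p); [right|left]; lia.
split => [Hhalf | Hbig].
  have H2s : (s i0 * 2 <= n)%N.
    rewrite -(ler_nat R) natrM Hs.
    have H0 : 0 <= n%:R :> R by rewrite ler0n.
    nra.
  pose h := (n - n./2)%N.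
  pose g := fun p : nat => if odd p then (h + p./2)%N else p./2.
  pose r := fun x : nat => if (x < h)%N then (2 * x)%N else (2 * (x - h)).+1.
  have gE : forall i, g (2 * i)%N = i.
    by move=> i; rewrite /g mul2n odd_double doubleK.
  have gO : forall i, g (2 * i).+1 = (h + i)%N.
    by move=> i; rewrite /g mul2n /= odd_double /= uphalf_double.
  have rg : forall p, (p < n)%N -> r (g p) = p.
    move=> p Hp; have [i [E|E]] := par p; rewrite E ?gE ?gO /r; case: ifP; lia.
  have gr : forall x, (x < n)%N -> g (r x) = x.
    move=> x Hx; rewrite /r; case: ifP => H; rewrite ?gE ?gO; lia.
  have R1 : forall x, (x < size L)%N -> (r x < size L)%N.
    move=> x; rewrite HLsz /r; case: ifP; lia.
  have R2 : forall x y, (x < size L)%N -> (y < size L)%N -> r x = r y -> x = y.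
    move=> x y Hx Hy E; by rewrite -(gr x) -?HLsz // E gr -?HLsz.
  have Hg : forall p, (p <= n.-1)%N -> (g p < size L)%N.
    move=> p Hp; rewrite HLsz; have [i [E|E]] := par p; subst p; rewrite ?gE ?gO; lia.
  have [Hw Hst] : is_weighting (wr L r) /\ stopped_at (@kpart_adj k s) (wr L r) n.-1.+1.
    apply: (@construct _ _ L x0 g r n.-1 HLu HLall R1 R2) => //.
    - by rewrite (gE 0%N) /r; case: ifP; lia.
    - move=> t Ht; split.
        rewrite /qf /kpart_adj; apply/negP => /eqP E.
        have [i [Et|Et]] := par t; subst t.
          rewrite gE gO in E.
          have := HC i (h + i)%N _ _ _ erefl (esym E); have := Hmax (tag (nth x0 L i)).
          lia.
        rewrite gO (_ : (2 * i).+2 = 2 * i.+1)%N ?gE in E; last by lia.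
        have B1 : (h + i < n)%N by lia.
        have B2 : (i.+1 < n)%N by lia.
        have B3 : (i.+1 <= h + i)%N by lia.
        have := HC i.+1 (h + i)%N _ B3 B1 erefl E; have := Hmax (tag (nth x0 L i.+1)).
        have E1 := Hpre _ B1; have E2 := Hpre _ B2.
        rewrite E E2 in E1.
        have F : (h + i < s i0)%N = false by apply/negbTE; rewrite -leqNgt; lia.
        rewrite F in E1; move/negbT: E1; rewrite -leqNgt; lia.
      move=> x Hx _ Hne.
      have Hgt : forall i, (i <= t)%N -> (g i < size L)%N by move=> i Hi; apply: Hg; lia.
      have Ht1 : Wt (wr L r) (qf L x0 g) t (qf L x0 g t.+1) = - (size L)%:Z + (r (g t.+1))%:Z.
        apply: (@W_idx_unvis _ L x0 g r t (g t.+1) HLu Hgt); first by apply: Hg; lia.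
        move=> i Hi; apply/eqP => E; have := rg i; have := rg t.+1; rewrite E; lia.
      rewrite Ht1 rg ?HLsz; last by lia.
      have Hp := gr x; rewrite HLsz in Hx; have Hpn := R1 x; rewrite HLsz in Hpn.
      case: (ltnP t (r x)) => Hpt.
        have Hne' : r x != t.+1.
          apply/eqP => E; move: Hne; by rewrite -E Hp ?eqxx.
        have -> : Wt (wr L r) (qf L x0 g) t (nth x0 L x) = - (size L)%:Z + (r x)%:Z.
          apply: (@W_idx_unvis _ L x0 g r t x HLu Hgt); first by rewrite HLsz.
          move=> i Hi; apply/eqP => E; have := rg i; rewrite E; lia.
        rewrite HLsz; lia.
      have := @W_idx_vis _ L x0 g r t (r x) x Hpt (Hp Hx).
      move/(lt_le_trans _); apply; lia.
    - move=> x Hx; exists (r x); last by apply: gr; rewrite -HLsz.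
      have := R1 x Hx; rewrite HLsz; lia.
  have Hn1 : n.-1.+1 = n by lia.
  rewrite Hn1 in Hst.
  split.
    exists (wr L r); split => //; split => // t Ht; apply/negP => /(LB1 _ _ Hw); lia.
  by move=> w0 m' Hw0 [Hst' _]; exact: LB1 Hst'.
have H2s : (n < s i0 * 2)%N.
  rewrite -(ltr_nat R) natrM Hs.
  have H0 : 0 < n%:R :> R by rewrite ltr0n.
  nra.
pose i1 : 'I_k := Ordinal (ltn_trans (ltnSn 1) Hk).
have Hi1 : i1 != i0 by rewrite -val_eqE /= Hi0.
have Hn2 : (s i0 + s i1 <= n)%N.
  rewrite -Hsn (bigD1 i0) //= (bigD1 i1) /=; last by rewrite Hi1.
  lia.
have Hs1 := Hspos i1.
pose m := (n - s i0)%N.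
have Hm : (0 < m)%N by lia.
have Hms : (m < s i0)%N by lia.
pose g := fun p : nat => if odd p then (s i0 + p./2 %% m)%N else p./2.
pose r := fun x : nat => if (x < s i0)%N then (if (x <= m)%N then (2 * x)%N else (m + x)%N)
                         else (2 * (x - s i0)).+1.
have gE : forall i, g (2 * i)%N = i.
  by move=> i; rewrite /g mul2n odd_double doubleK.
have gO : forall i, g (2 * i).+1 = (s i0 + i %% m)%N.
  by move=> i; rewrite /g mul2n /= odd_double /= uphalf_double.
have Hmodlt : forall i, (i %% m < m)%N by move=> i; rewrite ltn_pmod.
have R1 : forall x, (x < size L)%N -> (r x < size L)%N.
  move=> x; rewrite HLsz /r; case: (ltnP x (s i0)); case: (leqP x m); lia.
have R2 : forall x y, (x < size L)%N -> (y < size L)%N -> r x = r y -> x = y.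
  move=> x y; rewrite HLsz /r; case: (ltnP x (s i0)); case: (leqP x m);
    case: (ltnP y (s i0)); case: (leqP y m); lia.
pose N := (2 * s i0 - 2)%N.
have Hg : forall p, (p <= N)%N -> (g p < size L)%N.
  move=> p Hp; rewrite HLsz; have [i [E|E]] := par p; subst p; rewrite ?gE ?gO.
    lia.
  have := Hmodlt i; lia.
have rU : forall j, (j < m)%N -> r (s i0 + j)%N = (2 * j).+1.
  by move=> j Hj; rewrite /r ltnNge leq_addr /= addKn.
have gOs : forall i, (i < m)%N -> g (2 * i).+1 = (s i0 + i)%N.
  by move=> i Hi; rewrite gO modn_small.
have [Hw Hst] : is_weighting (wr L r) /\ stopped_at (@kpart_adj k s) (wr L r) N.+1.
  apply: (@construct _ _ L x0 g r N HLu HLall R1 R2) => //.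
  - by rewrite (gE 0%N) /r; case: (ltnP 0 (s i0)); case: (leqP 0 m); lia.
  - move=> t Ht.
    have Hgt : forall i, (i <= t)%N -> (g i < size L)%N by move=> i Hi; apply: Hg; lia.
    have [i [Et|Et]] := par t; subst t.
    +
      have Hi : (i.+1 < s i0)%N by lia.
      split.
        rewrite /qf /kpart_adj gE gO; apply/negP => /eqP E.
        have A1 := Hpre i (ltac:(lia) : (i < n)%N).
        have A2 := Hpre (s i0 + i %% m)%N (ltac:(have := Hmodlt i; lia) : (s i0 + i %% m < n)%N).
        rewrite E A2 in A1; move: A1; rewrite ltnNge leq_addr /= => A1.
        have : (i < s i0)%N by lia.
        by rewrite -A1.
      move=> x Hx Hadj Hne; rewrite HLsz in Hx.
      have Hxs : (s i0 <= x)%N.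
        case: (ltnP x (s i0)) => // Hxs.
        have := Hpre x Hx; have := Hpre i (ltac:(lia) : (i < n)%N).
        rewrite Hxs (ltac:(lia) : (i < s i0)%N).
        move=> /eqP A /eqP B; move: Hadj; by rewrite /qf /kpart_adj gE A B eqxx.
      have Hx' : x = (s i0 + (x - s i0))%N by lia.
      move: Hne; rewrite {1}Hx' gO eqn_add2l => Hne.
      have Hj : (x - s i0 < m)%N by lia.
      case: (ltnP i m) => Him.
      * have HR : (i %% m = i)%N by rewrite modn_small.
        rewrite HR in Hne.
        have Ht1 : Wt (wr L r) (qf L x0 g) (2 * i) (qf L x0 g (2 * i).+1) =
                   - (size L)%:Z + (r (g (2 * i).+1))%:Z.
          apply: (@W_idx_unvis _ L x0 g r (2 * i) (g (2 * i).+1) HLu Hgt); first by apply: Hg; lia.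
          move=> p Hp; have [p' [E|E]] := par p; subst p.
            by rewrite gE gO HR; apply/eqP; lia.
          by rewrite gOs ?gO ?HR; [apply/eqP; lia | lia].
        rewrite Ht1 gO HR rU // HLsz.
        case: (ltnP (x - s i0) i) => Hji.
          have := @W_idx_vis _ L x0 g r (2 * i) (2 * (x - s i0)).+1 x (ltac:(lia) : ((2 * (x - s i0)).+1 <= 2 * i)%N)
                    (ltac:(by rewrite gOs -?Hx') : g (2 * (x - s i0)).+1 = x).
          by move=> H; apply: (lt_le_trans _ H); lia.
        have -> : Wt (wr L r) (qf L x0 g) (2 * i) (nth x0 L x) = - (size L)%:Z + (r x)%:Z.
          apply: (@W_idx_unvis _ L x0 g r (2 * i) x HLu Hgt); first by rewrite HLsz.
          move=> p Hp; have [p' [E|E]] := par p; subst p.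
            by rewrite gE; apply/eqP; lia.
          by rewrite gOs; [apply/eqP; lia | lia].
        rewrite Hx' rU // HLsz; lia.
      * have Ht1 : Wt (wr L r) (qf L x0 g) (2 * i) (qf L x0 g (2 * i).+1) <=
                   ((2 * (i - m)).+1.+1)%:Z.
          apply: (@W_idx_last _ L x0 g r (2 * i) (2 * (i - m)).+1 (g (2 * i).+1) HLu Hgt).
          - by apply: Hg; lia.
          - have := R1 (g (2 * i).+1) (Hg _ (ltac:(lia) : (2 * i).+1 <= N)%N).
            lia.
          - lia.
          move=> p /andP[Hp1 Hp2]; have [p' [E|E]] := par p; subst p.
            rewrite gE gO; apply/eqP; lia.
          rewrite !gO eqn_add2l; apply: modneq => //; lia.
        have [i' Hi' Hi'm] := @mod_witness m i (x - s i0)%N Hm Him Hj Hne.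
        have := @W_idx_vis _ L x0 g r (2 * i) (2 * i').+1 x (ltac:(lia) : ((2 * i').+1 <= 2 * i)%N)
                  (ltac:(by rewrite gO Hi'm -Hx') : g (2 * i').+1 = x).
        move=> H; apply: (le_lt_trans Ht1); apply: (lt_le_trans _ H); lia.
    +
      have Hi : (i.+1 < s i0)%N by lia.
      have E2 : ((2 * i).+2 = 2 * i.+1)%N by lia.
      rewrite E2.
      split.
        rewrite /qf /kpart_adj gE gO; apply/negP => /eqP E.
        have A1 := Hpre i.+1 (ltac:(lia) : (i.+1 < n)%N).
        have A2 := Hpre (s i0 + i %% m)%N (ltac:(have := Hmodlt i; lia) : (s i0 + i %% m < n)%N).
        rewrite E A1 in A2; move: A2; rewrite [(s i0 + _ < _)%N]ltnNge leq_addr /= => A2.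
        by rewrite A2 in Hi.
      move=> x Hx _ Hne; rewrite HLsz in Hx; rewrite gE in Hne.
      have Ht1 : Wt (wr L r) (qf L x0 g) (2 * i).+1 (qf L x0 g (2 * i.+1)) =
                 - (size L)%:Z + (r (g (2 * i.+1)))%:Z.
        apply: (@W_idx_unvis _ L x0 g r (2 * i).+1 (g (2 * i.+1)) HLu Hgt); first by apply: Hg; lia.
        move=> p Hp; have [p' [E|E]] := par p; subst p.
          by rewrite !gE; apply/eqP; lia.
        by rewrite gO gE; apply/eqP; lia.
      rewrite Ht1 gE HLsz.
      have Hri : (r i.+1 < n)%N by have := R1 i.+1; rewrite HLsz; apply; lia.
      case: (ltnP x (s i0)) => Hxs.
        case: (leqP x i) => Hxi.
          have := @W_idx_vis _ L x0 g r (2 * i).+1 (2 * x) x (ltac:(lia) : (2 * x <= (2 * i).+1)%N) (gE x).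
          by move=> H; apply: (lt_le_trans _ H); lia.
        have -> : Wt (wr L r) (qf L x0 g) (2 * i).+1 (nth x0 L x) = - (size L)%:Z + (r x)%:Z.
          apply: (@W_idx_unvis _ L x0 g r (2 * i).+1 x HLu Hgt); first by rewrite HLsz.
          move=> p Hp; have [p' [E|E]] := par p; subst p.
            by rewrite gE; apply/eqP; lia.
          by rewrite gO; apply/eqP; lia.
        rewrite HLsz.
        have Hlt : (r i.+1 < r x)%N.
          rewrite /r Hi Hxs; case: (leqP i.+1 m); case: (leqP x m); lia.
        lia.
      have Hx' : x = (s i0 + (x - s i0))%N by lia.
      have Hj : (x - s i0 < m)%N by lia.
      case: (leqP (x - s i0) i) => Hji.
        have := @W_idx_vis _ L x0 g r (2 * i).+1 (2 * (x - s i0)).+1 x (ltac:(lia) : ((2 * (x - s i0)).+1 <= (2 * i).+1)%N)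
                  (ltac:(by rewrite gOs -?Hx') : g (2 * (x - s i0)).+1 = x).
        by move=> H; apply: (lt_le_trans _ H); lia.
      have -> : Wt (wr L r) (qf L x0 g) (2 * i).+1 (nth x0 L x) = - (size L)%:Z + (r x)%:Z.
        apply: (@W_idx_unvis _ L x0 g r (2 * i).+1 x HLu Hgt); first by rewrite HLsz.
        move=> p Hp; have [p' [E|E]] := par p; subst p.
          by rewrite gE; apply/eqP; lia.
        by rewrite gOs; [apply/eqP; lia | lia].
      rewrite HLsz Hx' rU //.
      have -> : r i.+1 = (2 * i.+1)%N by rewrite /r Hi (_ : (i.+1 <= m)%N) //; lia.
      lia.
  - move=> x Hx; rewrite HLsz in Hx; case: (ltnP x (s i0)) => Hxs.
      by exists (2 * x)%N; [lia | rewrite gE].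
    exists (2 * (x - s i0)).+1; first lia.
    by rewrite gOs; lia.
have HN : N.+1 = (2 * s i0).-1 by lia.
rewrite HN in Hst.
split.
  exists (wr L r); split => //; split => // t Ht; apply/negP => /(LB2 _ _ Hw); lia.
by move=> w0 m' Hw0 [Hst' _]; have := LB2 _ _ Hw0 Hst'; lia.
Qed.
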